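(* Let $f\in\mathbb{R}[x_1,\ldots,x_n]$ be a homogeneous cubic polynomial (homogeneous of degree $3$) which is irreducible in $\mathbb{R}[x_1,\ldots,x_n]$, $f\not\equiv 0$. Then the zero set $\mathcal{F}(f)=f^{-1}(0)\subset\mathbb{R}^n$ contains a regular point of $f$, i.e. a point $x\in\mathbb{R}^n$ with $f(x)=0$ and $\nabla f(x)\neq 0$.
   Context: $\mathcal{F}(f):=\{x\in\mathbb{R}^n: f(x)=0\}$ denotes the zero set of $f$ in $\mathbb{R}^n$. *)

(* Defs.v *)
From HB Require Import structures.
From mathcomp Require Import all_boot all_order all_algebra.
From mathcomp Require Import mpoly.
From mathcomp Require Import reals.
Set Implicit Arguments. Unset Strict Implicit. Unset Printing Implicit Defensive.
Import Order.TTheory GRing.Theory Num.Theory.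
Local Open Scope ring_scope.

Definition irreducible_elt (A : comUnitRingType) (p : A) : Prop :=
  p != 0 /\ p \isn't a GRing.unit /\
  forall g h : A, p = g * h -> g \is a GRing.unit \/ h \is a GRing.unit.

Definition zero_set (R : realType) (n : nat) (f : {mpoly R[n]}) : ('I_n -> R) -> Prop :=
  fun x => f.@[x] = 0.

Definition regular_point (R : realType) (n : nat) (f : {mpoly R[n]}) (x : 'I_n -> R) : Prop :=
  exists i : 'I_n, (mderiv i f).@[x] != 0.

(* Main.v *)
Require Import Defs.
From HB Require Import structures.
From mathcomp Require Import all_boot all_order all_algebra.
From mathcomp Require Import mpoly.
From mathcomp Require Import reals.
From mathcomp Require Import polyrcf.
From mathcomp Require Import zify ring.
From Stdlib Require Import FunctionalExtensionality Classical.
Import Order.TTheory GRing.Theory Num.Theory.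
Local Open Scope ring_scope.
Set Implicit Arguments. Unset Strict Implicit. Unset Printing Implicit Defensive.
Lemma poly_fun_eq0 (R : realType) (p : {poly R}) : (forall t, p.[t] = 0) -> p = 0.
Proof.
move=> H; apply/eqP; apply: contraT => pn0.
have := @max_poly_roots _ p [seq i%:R | i <- iota 0 (size p)] pn0.
rewrite size_map size_iota ltnn; apply.
  by apply/allP => x _; rewrite /root H.
rewrite map_inj_uniq ?iota_uniq //.
by move=> a b /eqP; rewrite eqr_nat => /eqP.
Qed.

Lemma mmap_morph (n : nat) (R S T : nzRingType) (f : R -> S) (h : 'I_n -> S)
   (g : {rmorphism S -> T}) (p : {mpoly R[n]}) :
  g (mmap f h p) = mmap (g \o f) (g \o h) p.
Proof.
rewrite /mmap rmorph_sum; apply: eq_bigr => m _; rewrite rmorphM /mmap1 rmorph_prod.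
by congr (_ * _); apply: eq_bigr => i _; rewrite rmorphXn.
Qed.

Lemma mmap_ext (n : nat) (R S : nzRingType) (f1 f2 : R -> S) (h1 h2 : 'I_n -> S)
   (p : {mpoly R[n]}) : f1 =1 f2 -> h1 =1 h2 -> mmap f1 h1 p = mmap f2 h2 p.
Proof.
move=> ef eh; rewrite /mmap; apply: eq_bigr => m _; rewrite ef /mmap1.
by congr (_ * _); apply: eq_bigr => i _; rewrite eh.
Qed.

Section Deriv.
Variables (R : comNzRingType) (n : nat) (v : 'I_n -> {poly R}).
Let Phi (p : {mpoly R[n]}) : {poly R} := mmap (@polyC R) v p.
Let P (p : {mpoly R[n]}) := (Phi p)^`() = \sum_i Phi (mderiv i p) * (v i)^`().

Let PhiM p q : Phi (p * q) = Phi p * Phi q.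
Proof. by rewrite /Phi rmorphM. Qed.
Let PhiD p q : Phi (p + q) = Phi p + Phi q.
Proof. by rewrite /Phi rmorphD. Qed.
Let PhiZ c p : Phi (c *: p) = c%:P * Phi p.
Proof. by rewrite /Phi mmapZ. Qed.

Let P0 : P 0.
Proof. by rewrite /P /Phi mmap0 deriv0 big1 // => i _; rewrite mderiv0 mmap0 mul0r. Qed.
Let P1 : P 1.
Proof.
rewrite /P /Phi rmorph1 -polyC1 derivC big1 // => i _.
by rewrite -mpolyC1 mderivC mmap0 mul0r.
Qed.
Let PD p q : P p -> P q -> P (p + q).
Proof.
rewrite /P PhiD derivD => -> ->; rewrite -big_split; apply: eq_bigr => i _.
by rewrite mderivD PhiD mulrDl.
Qed.
Let PZ c p : P p -> P (c *: p).
Proof.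
rewrite /P PhiZ derivM derivC mul0r add0r => ->; rewrite mulr_sumr.
by apply: eq_bigr => i _; rewrite mderivZ PhiZ mulrA.
Qed.
Let PM p q : P p -> P q -> P (p * q).
Proof.
rewrite /P PhiM derivM => -> ->; rewrite mulr_suml mulr_sumr -big_split.
apply: eq_bigr => i _; rewrite mderivM PhiD !PhiM.
by rewrite mulrDl -!mulrA [Phi q * _]mulrC.
Qed.
Let PX j : P 'X_j.
Proof.
rewrite /P /Phi mmapX mmap1U (bigD1 j) //= big1 ?addr0.
  rewrite mderivX mnm1E eqxx.
  have ->: (U_(j) - U_(j))%MM = 0%MM by apply/mnmP => k; rewrite mnmBE subnn mnm0E.
  by rewrite scale1r mpolyX0 rmorph1 mul1r.
move=> i /negbTE ne; rewrite mderivX mnm1E eq_sym ne scale0r raddf0 mul0r //.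
Qed.

Lemma mmap_deriv p : P p.
Proof.
rewrite (mpolyE p); apply: big_ind; [exact: P0 | exact: PD | move=> m _].
apply: PZ; rewrite mpolyXE_id; apply: big_ind; [exact: P1 | exact: PM | move=> i _].
elim: (m i) => [|k IH]; first by rewrite expr0; exact: P1.
by rewrite exprS; apply: PM.
Qed.
End Deriv.

Section Line.
Variables (R : realType) (n : nat).
Implicit Types (p q : {mpoly R[n]}) (x y : 'I_n -> R).

Definition lineP x y : 'I_n -> {poly R} := fun j => (x j)%:P + (y j)%:P * 'X.

Lemma line_eval x y p t :
  (mmap (@polyC R) (lineP x y) p).[t] = p.@[fun j => x j + t * y j].
Proof.
rewrite -horner_evalE mmap_morph /meval; apply: mmap_ext => [c|j] /=.
  by rewrite horner_evalE hornerC.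
by rewrite horner_evalE /lineP !hornerE mulrC.
Qed.

Lemma line_deriv x y p t :
  (mmap (@polyC R) (lineP x y) p)^`().[t] =
  \sum_j y j * (mderiv j p).@[fun j => x j + t * y j].
Proof.
rewrite mmap_deriv horner_sum; apply: eq_bigr => j _.
rewrite hornerM line_eval mulrC /lineP derivD derivC add0r derivM derivC derivX.
by rewrite mul0r add0r mulr1 hornerC.
Qed.

Lemma meval_zero p : p.@[fun=> 0] = p@_0.
Proof.
rewrite mevalE {3}(mpolyE p) raddf_sum /=; apply: eq_bigr => m _.
rewrite mcoeffZ mcoeffX; congr (_ * _).
have [->|nz] := eqVneq m 0%MM.
  by rewrite big1 // => i _; rewrite mnm0E expr0.
have [i mi]: exists i, m i != 0%N.
  apply/existsP; apply: contraR nz => /existsPn H; apply/eqP/mnmP => i.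
  by rewrite mnm0E; apply/eqP; move: (H i); rewrite negbK.
by rewrite (bigD1 i) //= expr0n (negbTE mi) mul0r.
Qed.

Lemma deriv_vanish p : (forall x, p.@[x] = 0) -> forall i x, (mderiv i p).@[x] = 0.
Proof.
move=> H i x.
pose y : 'I_n -> R := fun j => (i == j)%:R.
have Q0 : mmap (@polyC R) (lineP x y) p = 0.
  by apply: poly_fun_eq0 => t; rewrite line_eval H.
have := line_deriv x y p 0; rewrite Q0 deriv0 horner0.
rewrite (bigD1 i) //= big1 ?addr0; last first.
  by move=> j /negbTE ne; rewrite /y eq_sym ne mul0r.
rewrite /y eqxx mul1r => /esym <-; apply: meval_eq => j; by rewrite mul0r addr0.
Qed.

Lemma mpoly_fun_eq0 p : (forall x, p.@[x] = 0) -> p = 0.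
Proof.
move=> H.
have Hs : forall s : seq 'I_n, forall x, (foldr (@mderiv n R) p s).@[x] = 0.
  by elim=> [|i s IH] //= x; apply: deriv_vanish.
apply/mpolyP => m; rewrite mcoeff0.
have := Hs (flatten [seq nseq (m i) i | i <- enum 'I_n]) (fun=> 0).
rewrite -mderivm_foldr meval_zero mcoeff_mderivm addm0 => /eqP.
rewrite mulrn_eq0 => /orP[|/eqP //].
move=> /eqP E; exfalso; move: E; apply/eqP; rewrite -lt0n prodn_gt0 // => i.
by rewrite ffact_gt0.
Qed.
End Line.
From mathcomp Require Import lra.
Section Pd.
Variable (R : comNzRingType).
Definition Pd (p : {poly R}) (d : nat) (c : R) := (size p <= d.+1)%N /\ p`_d = c.

Lemma PdM p q a b c1 c2 : Pd p a c1 -> Pd q b c2 -> Pd (p * q) (a + b) (c1 * c2).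
Proof.
move=> [sp cp] [sq cq]; split.
  apply: leq_trans (size_polyMleq _ _) _.
  lia.
have ha : (a < (a + b).+1)%N by lia.
rewrite coefM (bigD1 (Ordinal ha)) //=.
rewrite addKn cp cq big1 ?addr0 // => [[j /= hj]] hne.
have {}hne : j != a by apply: contra hne => /eqP e; apply/eqP/val_inj.
case: (ltngtP j a) hne => // hja _.
  rewrite [q`__]nth_default ?mulr0 //; apply: leq_trans sq _.
  lia.
by rewrite [p`__]nth_default ?mul0r //; apply: leq_trans sp _.
Qed.

Lemma PdD p q d c1 c2 : Pd p d c1 -> Pd q d c2 -> Pd (p + q) d (c1 + c2).
Proof.
move=> [sp cp] [sq cq]; split; last by rewrite coefD cp cq.
by apply: leq_trans (size_polyD _ _) _; rewrite geq_max sp sq.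
Qed.

Lemma PdC c p d c1 : Pd p d c1 -> Pd (c%:P * p) d (c * c1).
Proof.
move=> [sp cp]; split; last by rewrite coefCM cp.
apply: leq_trans (size_polyMleq _ _) _; rewrite size_polyC.
have := leq_b1 (c != 0); lia.
Qed.

Lemma PdX p c k : Pd p 1 c -> Pd (p ^+ k) k (c ^+ k).
Proof.
move=> H; elim: k => [|k IH].
  by rewrite !expr0; split; [rewrite size_poly1 | rewrite coef1].
by rewrite !exprS -add1n; apply: PdM.
Qed.

Lemma Pd0 d : Pd 0 d 0.
Proof. by split; rewrite ?size_poly0 ?coef0. Qed.
End Pd.
Lemma cubic (R : realType) (Q : {poly R}) : (size Q <= 4)%N -> Q`_3 != 0 ->
  (forall t, Q.[t] = 0 -> Q^`().[t] = 0) -> 27%:R * Q`_3 ^+ 2 * Q`_0 = Q`_2 ^+ 3.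
Proof.
move=> s4 a0 H.
have sQ : size Q = 4%N.
  apply/eqP; rewrite eqn_leq s4 /=; apply: contraR a0; rewrite -ltnNge ltnS => s3.
  by rewrite nth_default.
have ev t : Q.[t] = Q`_0 + Q`_1 * t + Q`_2 * t ^+ 2 + Q`_3 * t ^+ 3.
  by rewrite (horner_coef_wide _ s4) !big_ord_recl big_ord0 /= expr0 mulr1 expr1 addr0 !addrA.
have evd t : Q^`().[t] = Q`_1 + Q`_2 * 2%:R * t + Q`_3 * 3%:R * t ^+ 2.
  have s3 : (size Q^`() <= 3)%N by rewrite polyorder.size_deriv sQ.
  rewrite (horner_coef_wide _ s3) !big_ord_recl big_ord0 /= !coef_deriv.
  by rewrite expr0 mulr1 expr1 addr0 !addrA !mulr_natr mulr1n.
set a := Q`_3 in a0 ev evd *; set b := Q`_2 in ev evd *.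
set c := Q`_1 in ev evd *; set d := Q`_0 in ev evd *.
have [|t0 rt0] := @odd_poly_root _ Q; first by rewrite sQ.
have H0 := rt0; rewrite /root ev in H0; move/eqP: H0 => H0.
have H1 := H t0 (eqP rt0); rewrite evd in H1.
have ec : c = - (b * 2%:R * t0 + a * 3%:R * t0 ^+ 2).
  by apply/eqP; rewrite -subr_eq0 -H1; apply/eqP; ring.
have ed : d = - (c * t0 + b * t0 ^+ 2 + a * t0 ^+ 3).
  by apply/eqP; rewrite -subr_eq0 -H0; apply/eqP; ring.
pose t1 := - b / a - 2%:R * t0.
have Q1 : Q.[t1] = 0.
  rewrite ev ed ec /t1; field; exact: a0.
have := H t1 Q1; rewrite evd ec /t1 => E.
have E2 : a * (- b / a - 3%:R * t0) ^+ 2 = 0.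
  rewrite -E; field; exact: a0.
move/eqP: E2; rewrite mulf_eq0 (negbTE a0) /= sqrf_eq0 => /eqP E3.
have eb : b = - (3%:R * a * t0).
  have : a * (- b / a - 3%:R * t0) = 0 by rewrite E3 mulr0.
  move=> E4; have : b = - (3%:R * a * t0) - a * (- b / a - 3%:R * t0).
    by field; exact: a0.
  by rewrite E4 subr0.
rewrite ed ec eb; ring.
Qed.

Section Main.
Variables (R : realType) (n : nat).

Lemma lineP_Pd (x y : 'I_n -> R) i : Pd (lineP x y i) 1 (y i).
Proof.
rewrite /lineP; split.
  apply: leq_trans (size_polyD _ _) _; rewrite geq_max.
  apply/andP; split; first by rewrite size_polyC; have := leq_b1 (x i != 0); lia.
  by apply: leq_trans (size_polyMleq _ _) _; rewrite size_polyX size_polyC; have := leq_b1 (y i != 0); lia.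
by rewrite coefD coefC coefCM coefX /= add0r mulr1.
Qed.

Lemma line_top (f : {mpoly R[n]}) x y : f \is 3.-homog ->
  Pd (mmap (@polyC R) (lineP x y) f) 3 (f.@[y]).
Proof.
move=> /dhomogP hf; rewrite /mmap mevalE big_seq [X in Pd _ _ X]big_seq.
elim/big_rec2: _ => [|m a b Hm IH]; first exact: Pd0.
apply: PdD => //; apply: PdC.
have -> : 3%N = (\sum_(i < n) m i)%N by rewrite -mdegE hf.
rewrite /mmap1.
elim: (index_enum _) => [|i s IH2].
  by rewrite !big_nil; split; [rewrite size_poly1 | rewrite coef1].
rewrite !big_cons; apply: PdM => //; apply: PdX; apply: lineP_Pd.
Qed.

Definition Lgen (f : {mpoly R[n]}) (y : 'I_n -> R) : {mpoly R[n]} :=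
  (mmap (fun c : R => (c%:MP : {mpoly R[n]})%:P)
        (fun i => ('X_i)%:P + ((y i)%:MP)%:P * 'X) f)`_2.

Lemma Lgen_eval f x y : (mmap (@polyC R) (lineP x y) f)`_2 = (Lgen f y).@[x].
Proof.
have E := @mmap_morph n R _ _ (fun c : R => (c%:MP : {mpoly R[n]})%:P)
  (fun i => ('X_i)%:P + ((y i)%:MP)%:P * 'X) (map_poly (meval x)) f.
rewrite /Lgen -(coef_map (meval x)) E.
congr (_`_2).
have H1 := @mmap_ext n R {poly R} polyC (map_poly (meval x) \o (fun c : R => (c%:MP_[n])%:P)) (lineP x y) (map_poly (meval x) \o (fun i : 'I_n => ('X_i)%:P + ((y i)%:MP_[n])%:P * 'X)) f.
rewrite H1 // => [c|i] /=.
  by rewrite map_polyC /= mevalC.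
by rewrite /lineP rmorphD rmorphM /= !map_polyC map_polyX /= mevalXU mevalC.
Qed.

Lemma const_not_homog (f : {mpoly R[n]}) c : f \is 3.-homog -> f != 0 -> f <> c%:MP.
Proof.
move=> hf f0 E.
have h0 : f \is 0.-homog.
  by rewrite E -[c%:MP]mulr1 mul_mpolyC; apply: dhomogZ; apply: dhomog1.
by have := dhomog_uniq f0 hf h0.
Qed.

Lemma unit_const (p : {mpoly R[n]}) : p \is a GRing.unit -> p = (p@_0)%:MP.
Proof. by case/andP => /eqP. Qed.
End Main.

Theorem lemma1 (R : realType) (n : nat) (f : {mpoly R[n]}) :
  f \is 3.-homog -> irreducible_elt f -> f != 0 ->
  exists x : 'I_n -> R, zero_set f x /\ regular_point f x.
Proof.
move=> hf [_ [_ Hfac]] f0.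
apply: NNPP => Hno.
have Hsing : forall z, f.@[z] = 0 -> forall i, (mderiv i f).@[z] = 0.
  move=> z fz i; apply/eqP; apply: contraT => nz; exfalso; apply: Hno; exists z.
  by split; [exact: fz | exists i].
have [y fy] : exists y, f.@[y] != 0.
  apply: NNPP => H; move/eqP: f0; apply; apply: mpoly_fun_eq0 => x.
  by apply/eqP; apply: contraT => nx; exfalso; apply: H; exists x.
have n27 : (27%:R : R) != 0 by rewrite pnatr_eq0.
pose c := (27%:R * f.@[y] ^+ 2)^-1.
pose L := Lgen f y.
have key : f = c *: L ^+ 3.
  apply/eqP; rewrite -subr_eq0; apply/eqP; apply: mpoly_fun_eq0 => x.
  rewrite mevalB mevalZ !exprS expr0 !mevalM meval1.
  pose Q := mmap (@polyC R) (lineP x y) f.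
  have [sQ cQ] := line_top x y hf.
  have Q3 : Q`_3 != 0 by rewrite cQ.
  have hroot : forall t, Q.[t] = 0 -> Q^`().[t] = 0.
    move=> t; rewrite line_eval => /Hsing Hz; rewrite line_deriv big1 // => j _.
    by rewrite Hz mulr0.
  have := cubic sQ Q3 hroot.
  have -> : Q`_0 = f.@[x].
    by rewrite -horner_coef0 line_eval; apply: meval_eq => j; rewrite mul0r addr0.
  rewrite cQ Lgen_eval -/L => E.
  rewrite /c; apply/eqP; rewrite subr_eq0; apply/eqP.
  rewrite mulr1 -expr2 -exprS -E mulrA mulVf ?mul1r //.
  by rewrite mulf_neq0 // expf_neq0.

have L0 : L != 0.
  by apply: contra f0 => /eqP L0; rewrite key L0 expr0n /= scaler0.
have c0 : c != 0 by rewrite invr_eq0 mulf_neq0 // expf_neq0.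
have fact : f = L * (c *: L ^+ 2) by rewrite key -scalerAr -exprS.
have Lc : L = (L@_0)%:MP.
  case: (Hfac _ _ fact) => [/unit_const //|/unit_const hu].
  set u := c *: L ^+ 2 in hu.
  have u0 : u@_0 != 0.
    apply: contra f0 => /eqP u00; rewrite fact.
    by rewrite -/u hu u00 mpolyC0 mulr0.
  have mu : msize u = 1%N by rewrite hu msizeC u0.
  have : msize (L * L) = 1%N by rewrite -mu /u msizeZ // expr2.
  rewrite msizeM // => ms; apply: msize1_polyC; move: ms.
  case: (mmeasure mdeg L) => [|[|k]] //=; lia.
apply: (@const_not_homog R n f (c * (L@_0) ^+ 3) hf f0).
by rewrite key {1}Lc -rmorphXn /= -mul_mpolyC -rmorphM.
Qed.
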